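(* Assume (A4). Let $\beta>0$, $p\in(0,2]$, $t_0>0$, and let $w:[t_0,\infty)\to\mathbb R^m$ be continuous with $w(t)\to w^*\in\mathbb R^m$ as $t\to\infty$. For $t\ge t_0$ let $$z(t):=\operatorname{argmin}_{z\in\mathcal H}\ \max_{i=1,\dots,m}\big(f_i(z)-w_i(t)\big)+\frac{\beta}{2t^p}\|z\|^2$$ (unique minimizer). Then $z(t)\to z_0(w^* )$ strongly as $t\to\infty$.
   Context: $\mathcal H$ is a real Hilbert space with norm $\|\cdot\|$; $f_1,\dots,f_m:\mathcal H\to\mathbb R$ are convex and continuously differentiable. For $w\in\mathbb R^m$, $S(w):=\operatorname{argmin}_{z\in\mathcal H}\max_{i}(f_i(z)-w_i)$ and $z_0(w):=\operatorname{proj}_{S(w)}(0)$, the element of minimal norm of $S(w)$. Assumption (A4): $S(w)\neq\emptyset$ for every $w\in\mathbb R^m$ and the map $w\mapsto z_0(w)$ is continuous on $\mathbb R^m$. *)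

(* Defs.v *)
From HB Require Import structures.
From mathcomp Require Import all_boot all_order all_algebra.
From mathcomp Require Import all_classical all_reals all_analysis.
Set Implicit Arguments. Unset Strict Implicit. Unset Printing Implicit Defensive.
Import Order.TTheory GRing.Theory Num.Theory.
Import numFieldNormedType.Exports.
Local Open Scope classical_set_scope.
Local Open Scope ring_scope.

Definition inner_product (R : realType) (H : normedModType R) (ip : H -> H -> R) :=
  [/\ (forall x y, ip x y = ip y x),
      (forall (a : R) (x y z : H), ip (a *: x + y) z = a * ip x z + ip y z)
    & (forall x, ip x x = `|x| ^+ 2)].

Definition convex_fun (R : realType) (H : normedModType R) (f : H -> R) :=
  forall (x y : H) (l : R), 0 <= l <= 1 ->
    f (l *: x + (1 - l) *: y) <= l * f x + (1 - l) * f y.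

(* continuously (Frechet) differentiable: differentiable everywhere, with a
   continuous gradient (Riesz representative of the differential) *)
Definition C1_fun (R : realType) (H : normedModType R) (ip : H -> H -> R)
  (f : H -> R) :=
  exists g : H -> H, continuous g /\
    forall x, differentiable f x /\ ('d f x : H -> R) = (fun h => ip (g x) h).

Definition maxgap (R : realType) (H : Type) (m : nat) (hm : (0 < m)%N)
  (f : 'I_m -> H -> R) (w : 'rV[R]_m) (z : H) : R :=
  \big[Num.max/(f (Ordinal hm) z - w 0 (Ordinal hm))]_(i < m) (f i z - w 0 i).

Definition Sset (R : realType) (H : Type) (m : nat) (hm : (0 < m)%N)
  (f : 'I_m -> H -> R) (w : 'rV[R]_m) : set H :=
  [set z | forall y, maxgap hm f w z <= maxgap hm f w y].

Definition min_norm_elt (R : realType) (H : normedModType R) (A : set H) (x : H) :=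
  A x /\ forall y, A y -> `|x| <= `|y|.

(* Main.v *)
Require Import Defs.
From HB Require Import structures.
From mathcomp Require Import all_boot all_order all_algebra.
From mathcomp Require Import all_classical all_reals all_analysis.
Import Order.TTheory GRing.Theory Num.Theory.
Import numFieldNormedType.Exports.
Local Open Scope classical_set_scope.
Local Open Scope ring_scope.
From mathcomp Require Import lra ring.
Lemma entry_le (R : realType) m (x : 'rV[R]_m) i : `|x 0 i| <= `|x|.
Proof. change (`|x 0 i| <= mx_norm x). rewrite mx_normrE. exact: (le_bigmax _ _ (0, i)). Qed.

Section IP.
Variables (R : realType) (H : normedModType R) (ip : H -> H -> R).
Hypothesis Hip : inner_product ip.

Lemma ip0l z : ip 0 z = 0.
Proof. case: Hip => _ Hl _; have := Hl 1 0 0 z; rewrite scaler0 addr0 mul1r; lra. Qed.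
Lemma ipZl a x z : ip (a *: x) z = a * ip x z.
Proof. case: Hip => _ Hl _; have := Hl a x 0 z; rewrite addr0 ip0l addr0 //. Qed.
Lemma ipDl x y z : ip (x + y) z = ip x z + ip y z.
Proof. case: Hip => _ Hl _; have := Hl 1 x y z; rewrite scale1r mul1r //. Qed.
Lemma ipZr a x z : ip z (a *: x) = a * ip z x.
Proof. case: Hip => Hs _ _; by rewrite Hs ipZl Hs. Qed.
Lemma ipDr x y z : ip z (x + y) = ip z x + ip z y.
Proof. case: Hip => Hs _ _; by rewrite Hs ipDl Hs (Hs y). Qed.

Lemma ipE2 a b x y : ip (a *: x + b *: y) (a *: x + b *: y) =
  a ^+ 2 * ip x x + 2 * a * b * ip x y + b ^+ 2 * ip y y.
Proof. case: Hip => Hs _ _. rewrite !ipDl !ipZl !ipDr !ipZr (Hs y x). ring. Qed.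

Lemma sqn_comb (l : R) (x y : H) : `|l *: x + (1 - l) *: y| ^+ 2 =
  l * `|x| ^+ 2 + (1 - l) * `|y| ^+ 2 - l * (1 - l) * `|x - y| ^+ 2.
Proof.
case: Hip => _ _ Hn. have -> : x - y = 1 *: x + (-1) *: y by rewrite scale1r scaleN1r.
rewrite -!Hn !ipE2. ring.
Qed.
End IP.
Section MG.
Variables (R : realType) (H : Type) (m : nat) (hm : (0 < m)%N) (f : 'I_m -> H -> R).

Lemma mg_ge (w : 'rV[R]_m) y i : f i y - w 0 i <= maxgap hm f w y.
Proof. exact: le_bigmax. Qed.

Lemma mg_le (w : 'rV[R]_m) y c : (forall i, f i y - w 0 i <= c) -> maxgap hm f w y <= c.
Proof. move=> h; apply: bigmax_le => // i _; exact: h. Qed.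

Lemma mg_shift (w w' : 'rV[R]_m) y d : (forall i, `|w 0 i - w' 0 i| <= d) ->
  maxgap hm f w y <= maxgap hm f w' y + d.
Proof.
move=> h; apply: mg_le => i.
have /andP[h1 h2] : - d <= w 0 i - w' 0 i <= d by rewrite -ler_norml.
have := mg_ge w' y i; lra.
Qed.
End MG.

Lemma mg_conv (R : realType) (H : normedModType R) (m : nat) (hm : (0 < m)%N)
  (f : 'I_m -> H -> R) (w : 'rV[R]_m) :
  (forall i, convex_fun (f i)) -> convex_fun (maxgap hm f w).
Proof.
move=> hc x y l /andP[l0 l1]; apply: mg_le => i.
have := hc i x y l; rewrite l0 l1 => /(_ isT) h.
have := @mg_ge _ _ _ hm f w x i; have := @mg_ge _ _ _ hm f w y i.
have : 0 <= 1 - l by lra. nra.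
Qed.
Lemma min_strong (R : realType) (H : normedModType R) (ip : H -> H -> R)
  (Hip : inner_product ip) (M : H -> R) (c : R) (z y : H) :
  convex_fun M -> 0 < c ->
  (forall y, M z + c * `|z| ^+ 2 <= M y + c * `|y| ^+ 2) ->
  M z + c * `|z| ^+ 2 + c / 2 * `|y - z| ^+ 2 <= M y + c * `|y| ^+ 2.
Proof.
move=> hconv c0 hmin.
have hu := hmin (2^-1 *: y + (1 - 2^-1) *: z).
have hM := hconv y z (2^-1).
rewrite (@sqn_comb R H ip Hip) in hu.
have h2 : 0 <= (2:R)^-1 <= 1 by apply/andP; split; [rewrite invr_ge0|rewrite invf_le1]; lra.
move: (hM h2) => {}hM.
have e : 1 - (2:R)^-1 = 2^-1 by field.
rewrite e in hu hM.
nra.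
Qed.
Lemma keyK (R : realType) (H : completeNormedModType R) (ip : H -> H -> R)
  (Hip : inner_product ip) (m : nat) (hm : (0 < m)%N) (f : 'I_m -> H -> R)
  (Hconv : forall i, convex_fun (f i)) (Hcont : forall i, continuous (f i))
  (w : 'rV[R]_m) (zs : H) (Hzs : min_norm_elt (Sset hm f w) zs) (e : R) :
  0 < e -> exists2 eta, 0 < eta & forall y,
    maxgap hm f w y <= maxgap hm f w zs + eta -> `|zs| ^+ 2 - e <= `|y| ^+ 2.
Proof.
move=> e0; apply: contrapT => hno.
pose M := maxgap hm f w; pose ms := M zs; pose r := `|zs| ^+ 2 - e.
have hex : forall eta, 0 < eta -> exists y, M y <= ms + eta /\ `|y| ^+ 2 <= r.
  move=> eta eta0; apply: contrapT => hn; apply: hno; exists eta => // y hy.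
  rewrite leNgt; apply/negP => hlt; apply: hn; exists y; split => //; exact: ltW.
pose D eta y := M y <= ms + eta /\ `|y| ^+ 2 <= r.
pose E := [set s : R | exists2 eta, 0 < eta & forall y, D eta y -> s <= `|y| ^+ 2].
have hE : has_sup E.
  split; first by exists 0, 1 => // y _; rewrite sqr_ge0.
  exists r => s [eta eta0 hs]; have [y hy] := hex eta eta0; exact: le_trans (hs y hy) hy.2.
pose A := sup E.
have hii : forall eta eps, 0 < eta -> 0 < eps -> exists y, D eta y /\ `|y| ^+ 2 < A + eps.
  move=> eta eps eta0 eps0; apply: contrapT => hn.
  have : E (A + eps).
    exists eta => // y hy; rewrite leNgt; apply/negP => hlt; apply: hn; exists y; by split.
  move=> /(sup_upper_bound hE); rewrite -/A; lra.
have hiii : forall eps, 0 < eps -> exists2 eta, 0 < eta & forall y, D eta y -> A - eps <= `|y| ^+ 2.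
  move=> eps eps0; have [s [eta eta0 hs] hsA] := sup_adherent eps0 hE.
  exists eta => // y hy; have := hs y hy; rewrite -/A in hsA; lra.
have /choice [y hy] : forall n : nat, exists y, D (n.+1%:R^-1) y /\ `|y| ^+ 2 < A + n.+1%:R^-1.
  by move=> n; apply: hii; rewrite invr_gt0 ltr0Sn.
have hMc := @mg_conv R H m hm f w Hconv.
have e2 : 1 - (2:R)^-1 = 2^-1 by field.
have h2 : 0 <= (2:R)^-1 <= 1 by apply/andP; split; [rewrite invr_ge0|rewrite invf_le1]; lra.
have hDm : forall eta a b, D eta a -> D eta b -> D eta (2^-1 *: a + (1 - 2^-1) *: b).
  move=> eta a b [ha1 ha2] [hb1 hb2]; split.
    have := hMc a b _ h2; rewrite e2 -/M; lra.
  rewrite (@sqn_comb R H ip Hip) e2; have := sqr_ge0 `|a - b|; nra.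
have hcau : cauchy_ex (y @ \oo).
  move=> eps eps0.
  pose d := eps ^+ 2 / 16.
  have d0 : 0 < d by rewrite /d divr_gt0 // exprn_gt0.
  have [eta0 eta00 h0] := hiii d d0.
  have [N1 _ hN1] := near_infty_natSinv_lt (PosNum eta00).
  have [N2 _ hN2] := near_infty_natSinv_lt (PosNum d0).
  have key : forall a b, (maxn N1 N2 <= a)%N -> (maxn N1 N2 <= b)%N ->
      `|y a - y b| ^+ 2 < 8 * d.
    move=> a b; rewrite !geq_max => /andP[a1 a2] /andP[b1 b2].
    have ia1 := hN1 a a1; have ia2 := hN2 a a2; have ib1 := hN1 b b1; have ib2 := hN2 b b2.
    rewrite /= in ia1 ia2 ib1 ib2.
    have [[ha1 ha2] ha3] := hy a; have [[hb1 hb2] hb3] := hy b.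
    have Da : D eta0 (y a) by split => //; apply: le_trans ha1 _; rewrite lerD2l ltW.
    have Db : D eta0 (y b) by split => //; apply: le_trans hb1 _; rewrite lerD2l ltW.
    have := h0 _ (hDm _ _ _ Da Db).
    rewrite (@sqn_comb R H ip Hip) e2 => hh.
    have ha4 : `|y a| ^+ 2 < A + d by apply: lt_trans ha3 _; rewrite ltrD2l.
    have hb4 : `|y b| ^+ 2 < A + d by apply: lt_trans hb3 _; rewrite ltrD2l.
    clear -hh ha4 hb4. lra.
  exists (y (maxn N1 N2)); exists (maxn N1 N2) => // n /= hn.
  rewrite -ball_normE /ball_ /=.
  have := key _ _ (leqnn _) hn; have := normr_ge0 (y (maxn N1 N2) - y n).
  rewrite /d; nra.
have hcvg : cvg (y @ \oo) by apply/cauchy_cvgP; exact: cauchy_exP.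
set yl := lim (y @ \oo).
have hyl : y @ \oo --> yl := hcvg.
have hf : forall i eta, 0 < eta -> f i yl - w 0 i <= ms + eta.
  move=> i eta eta0.
  have [N _ hN] := near_infty_natSinv_lt (PosNum eta0).
  apply: (@closed_cvg _ _ \oo _ (fun n => f i (y n) - w 0 i) [set x | x <= ms + eta]).
  - exact: closed_le.
  - exists N => // n hn /=. have := hN n hn; have [[h1 _] _] := hy n => /= hh.
    apply: le_trans (@mg_ge R H m hm f w (y n) i) _.
    apply: le_trans h1 _; rewrite lerD2l; exact: ltW.
  - apply: (@cvgB _ _ _ _ _ (fun n => f i (y n)) (fun=> w 0 i)); last exact: cvg_cst.
    exact: (cvg_comp _ _ hyl (Hcont i yl)).
have hMyl : M yl <= ms.
  apply: mg_le => i; apply/ler_addgt0Pr => eta eta0; exact: hf.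
have hNyl : `|yl| * `|yl| <= r.
  apply: (@closed_cvg _ _ \oo _ ((fun n => `|y n|) \* (fun n => `|y n|)) [set x | x <= r]).
  - exact: closed_le.
  - exists 0%N => // n _ /=; rewrite -expr2; exact: (hy n).1.2.
  - exact: cvgM (cvg_norm hyl) (cvg_norm hyl).
have Syl : Sset hm f w yl by move=> y'; exact: le_trans hMyl (Hzs.1 y').
have hle := Hzs.2 yl Syl.
have := normr_ge0 zs; rewrite /r in hNyl; clear -hle hNyl e0; nra.
Qed.
Lemma ct_small (R : realType) (beta p K : R) : 0 < beta -> 0 < p -> 0 < K ->
  \forall t \near +oo, beta / (2 * t `^ p) < K.
Proof.
move=> b0 p0 K0; pose T := (beta / (2 * K)) `^ (p^-1).
have T0 : 0 <= T by exact: powR_ge0.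
have hT : T `^ p = beta / (2 * K).
  rewrite /T -powRrM mulVf ?gt_eqF // powRr1 //; apply/ltW/divr_gt0 => //; exact: mulr_gt0.
near=> t.
have tT : T < t by near: t; apply: nbhs_pinfty_gt; rewrite num_real.
have t0 : 0 < t by exact: le_lt_trans T0 tT.
have := @gt0_ltr_powR R p p0 T t; rewrite !nnegrE T0 (ltW t0) => /(_ isT isT tT).
rewrite hT => h.
have tp0 : 0 < t `^ p by exact: powR_gt0.
rewrite ltr_pdivrMr ?mulr_gt0 //.
move: h; rewrite ltr_pdivrMr ?mulr_gt0 // => h.
clear -h; lra.
Unshelve. all: by end_near.
Qed.
Theorem mainTheorem5 (R : realType) (H : completeNormedModType R)
  (ip : H -> H -> R) (m : nat) (hm : (0 < m)%N) (f : 'I_m -> H -> R)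
  (z0 : 'rV[R]_m -> H)
  (Hip : inner_product ip)
  (Hconv : forall i, convex_fun (f i))
  (HC1 : forall i, C1_fun ip (f i))
  (* (A4) *)
  (HA4ne : forall w, Sset hm f w !=set0)
  (Hz0 : forall w, min_norm_elt (Sset hm f w) (z0 w))
  (HA4cont : continuous z0)
  (beta p t0 : R) (hbeta : 0 < beta) (hp0 : 0 < p) (hp2 : p <= 2) (ht0 : 0 < t0)
  (w : R -> 'rV[R]_m) (wstar : 'rV[R]_m)
  (hwcont : {within `[t0, +oo[, continuous w})
  (hwlim : w t @[t --> +oo] --> wstar)
  (z : R -> H)
  (hz : forall t, t0 <= t -> forall y : H,
      maxgap hm f (w t) (z t) + beta / (2 * t `^ p) * `|z t| ^+ 2
      <= maxgap hm f (w t) y + beta / (2 * t `^ p) * `|y| ^+ 2) :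
  z t @[t --> +oo] --> z0 wstar.
Proof.
have Hcont : forall i, continuous (f i).
  move=> i x; have [g [_ hg]] := HC1 i; exact: differentiable_continuous (hg x).1.
set zs := z0 wstar.
set K := `|zs|.
have K0 : 0 <= K by exact: normr_ge0.
apply/cvgrPdist_lt => eps eps0.
pose et1 := Num.min 1 (eps ^+ 2 / (64 * (K + 1))).
have et10 : 0 < et1 by rewrite lt_min ltr01 /= divr_gt0 ?exprn_gt0 // mulr_gt0 // ltr_wpDl.
pose e2 := eps ^+ 2 / 32.
have e20 : 0 < e2 by rewrite divr_gt0 ?exprn_gt0.
have [eta eta0 hK] := @keyK R H ip Hip m hm f Hconv Hcont wstar zs (Hz0 wstar) e2 e20.
have hxc := cvg_comp _ _ hwlim (HA4cont wstar).
have hK1 : 0 < K ^+ 2 + 1 by have := sqr_ge0 K; lra.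
near=> t.
have ht : t0 <= t by near: t; apply: nbhs_pinfty_ge; rewrite num_real.
have hx : `|zs - z0 (w t)| < Num.min et1 (eps / 2).
  near: t; move: hxc => /cvgrPdist_lt; apply; rewrite lt_min et10 divr_gt0 //.
have hd : `|wstar - w t| < eta / 4.
  near: t; move: hwlim => /cvgrPdist_lt; apply; rewrite divr_gt0 //.
have hc : beta / (2 * t `^ p) < eta / (2 * (K ^+ 2 + 1)).
  near: t; apply: ct_small => //; apply: divr_gt0 => //; exact: mulr_gt0.
set c := beta / (2 * t `^ p).
have c0 : 0 < c by rewrite /c divr_gt0 // mulr_gt0 // powR_gt0 // (lt_le_trans ht0 ht).
set x := z0 (w t); set zt := z t.
have Sx : Sset hm f (w t) x := (Hz0 (w t)).1.
have hmin := hz t ht.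
have hs := @min_strong R H ip Hip _ c zt x (@mg_conv R H m hm f (w t) Hconv) c0 hmin.
have hA : `|x - zt| ^+ 2 <= 2 * (`|x| ^+ 2 - `|zt| ^+ 2).
  have h1 := Sx zt.
  have h3 : c * `|x - zt| ^+ 2 <= c * (2 * (`|x| ^+ 2 - `|zt| ^+ 2)).
    clear -hs h1; lra.
  by rewrite ler_pM2l in h3.
set dd := `|wstar - w t|.
have hs1 : maxgap hm f wstar zt <= maxgap hm f (w t) zt + dd.
  apply: mg_shift => i; have := @entry_le R m (wstar - w t) i; rewrite !mxE //.
have hs2 : maxgap hm f (w t) zs <= maxgap hm f wstar zs + dd.
  apply: mg_shift => i; have := @entry_le R m (wstar - w t) i; rewrite !mxE distrC //.
have hm2 := hmin zs.
have hcK : c * (K ^+ 2 + 1) < eta / 2.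
  move: hc; rewrite -/c ltr_pdivlMr ?mulr_gt0 // => hc'.
  clear -hc'; lra.
have hzt2 : `|zt| ^+ 2 >= 0 by exact: sqr_ge0.
have hMz : maxgap hm f wstar zt <= maxgap hm f wstar zs + eta.
  have hcK2 : c * `|zs| ^+ 2 <= c * (K ^+ 2 + 1) by rewrite -/K ler_pM2l // lerDl.
  have hczt : 0 <= c * `|zt| ^+ 2 by rewrite mulr_ge0 // ltW.
  rewrite -/c -/zt in hm2; rewrite -/dd in hd.
  clear -hs1 hs2 hm2 hcK hcK2 hczt hd; lra.
have hNz := hK zt hMz.
set ex := `|zs - x|.
have hex0 : 0 <= ex by exact: normr_ge0.
have hxn : `|x| <= K + ex.
  have -> : x = zs - (zs - x) by rewrite opprB addrC subrK.
  exact: ler_normB.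
have hex1 : ex <= 1 by apply: le_trans (ltW hx) _; rewrite /et1 !ge_min lexx.
have hex2 : ex * (64 * (K + 1)) <= eps ^+ 2.
  have : ex <= eps ^+ 2 / (64 * (K + 1)) by apply: le_trans (ltW hx) _; rewrite /et1 !ge_min lexx !orbT.
  by rewrite ler_pdivlMr // mulr_gt0 // ltr_wpDl.
have hx2 : `|x| ^+ 2 <= K ^+ 2 + eps ^+ 2 / 32.
  have hxn0 := normr_ge0 x.
  have hh : `|x| ^+ 2 <= (K + ex) ^+ 2 by rewrite lerXn2r // ?nnegrE // addr_ge0.
  clear -hh hex0 hex1 hex2 K0; nra.
have hxz : `|x - zt| < eps / 2.
  have hn := normr_ge0 (x - zt).
  rewrite /e2 -/K in hNz; clear -hA hx2 hNz hn eps0; nra.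
have hzx : ex < eps / 2 by apply: lt_le_trans hx _; rewrite ge_min lexx orbT.
apply: le_lt_trans (ler_distD x zs zt) _.
rewrite -/ex; clear -hxz hzx; lra.
Unshelve. all: by end_near.
Qed.
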